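(* Let $k,p,q$ be integers with $q>0$, $\gcd(p,q)=1$ and $kq-p$ even, and let $Q=Q_2(L)$ be the involutory quandle with generators $a,b,c$ and defining relations $$R1: c^{ab}=c,\qquad R2: a^{(ca)^q}=a^{(ba)^{(kq-p)/2}},\qquad R3: b^{(bc)^q}=b^{(ab)^{(kq-p)/2}}.$$ Then the following relations also hold in $Q$: $c^{(ac)^{2q}}=c$; $a^{(ca)^{2q}}=a$; $b^{(cb)^{2q}}=b$; $a^{(ba)^{(kq-p)/2}}=a^{(ac)^q}$; $b^{(ab)^{(kq-p)/2}}=b^{(bc)^q}$; for $0\le i\le q$ and $0\le j\le \vert kq-p\vert/2$: $a^{(ca)^i(ba)^jc}=a^{(ca)^ic(ba)^j}$, $b^{(cb)^i(ab)^jc}=b^{(cb)^ic(ab)^j}$, $a^{(ca)^i(ab)^jabc}=a^{(ca)^{i+1}(ba)^jb}$, $b^{(cb)^i(ba)^jbac}=b^{(cb)^{i+1}(ab)^ja}$; $c^{(ac)^ia}=c^{(ac)^ib}$ for all $i\ge 0$.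
   Context: An involutory quandle is a set with a binary operation $(x,y)\mapsto x^y$ satisfying $x^x=x$, $(x^y)^y=x$ and $(x^y)^z=(x^z)^{(y^z)}$; a presentation denotes the involutory quandle generated by the given generators subject to the given relations and these axioms. Exponents are read left to right: $x^{yz}=(x^y)^z$, and $z^w$ for a word $w$ means successive action by its letters; negative powers are interpreted via $(xy)^{-1}=yx$. This presentation is the involutory quandle of $L=L(k,p/q)\cup C$, the two-bridge link built from a block of $k$ half-twists and a rational $p/q$-tangle together with an unknotted axis $C$, in the case $kq-p$ even. *)

(* Defs.v *)
From Stdlib Require Import ZArith List.
Import ListNotations.

Definition is_invol_quandle {T : Type} (op : T -> T -> T) : Prop :=
  (forall x, op x x = x) /\
  (forall x y, op (op x y) y = x) /\
  (forall x y z, op (op x y) z = op (op x z) (op y z)).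

(* x^w for a word w = [w1; ...; wn]: successive action, read left to right. *)
Definition act {T : Type} (op : T -> T -> T) (x : T) (w : list T) : T :=
  fold_left op w x.

Definition pw {T : Type} (u v : T) (n : nat) : list T :=
  concat (repeat [u; v] n).

(* The word (uv)^n for n an integer, using (uv)^{-1} = vu. *)
Definition zpw {T : Type} (u v : T) (n : Z) : list T :=
  if (0 <=? n)%Z then pw u v (Z.to_nat n) else pw v u (Z.to_nat (- n)).

(* Main.v *)
Require Import Defs.
From Stdlib Require Import ZArith List Lia.
Import ListNotations.

Lemma act_app {T} (op:T->T->T) x l1 l2 : act op x (l1++l2) = act op (act op x l1) l2.
Proof. unfold act. apply fold_left_app. Qed.
Lemma act_cons {T} (op:T->T->T) x y l : act op x (y::l) = act op (op x y) l.
Proof. reflexivity. Qed.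
Lemma act_nil {T} (op:T->T->T) x : act op x [] = x.
Proof. reflexivity. Qed.

Lemma pw_0 {T} (u v:T) : pw u v 0 = [].
Proof. reflexivity. Qed.
Lemma pw_S {T} (u v:T) n : pw u v (S n) = u :: v :: pw u v n.
Proof. reflexivity. Qed.
Lemma pw_add {T} (u v:T) n m : pw u v (n+m) = pw u v n ++ pw u v m.
Proof. induction n as [|n IH]; [reflexivity|]. change (S n + m)%nat with (S (n+m)).
  rewrite !pw_S, IH. reflexivity. Qed.
Lemma pw_Sr {T} (u v:T) n : pw u v (S n) = pw u v n ++ [u;v].
Proof. rewrite <- Nat.add_1_r, pw_add. reflexivity. Qed.
Lemma pw_snoc {T} (u v:T) n : pw u v n ++ [u] = u :: pw v u n.
Proof. induction n as [|n IH]; [reflexivity|]. rewrite !pw_S. simpl. rewrite IH. reflexivity. Qed.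
Lemma rev_pw {T} (u v:T) n : rev (pw u v n) = pw v u n.
Proof. induction n as [|n IH]; [reflexivity|]. rewrite pw_S. simpl. rewrite IH, <- app_assoc.
  rewrite pw_Sr. reflexivity. Qed.

Section Q.
Context {T : Type} (op : T -> T -> T).
Hypothesis opI : forall x, op x x = x.
Hypothesis opK : forall x y, op (op x y) y = x.
Hypothesis opD : forall x y z, op (op x y) z = op (op x z) (op y z).

Lemma fix_pw z u v n : op (op z u) v = z -> act op z (pw u v n) = z.
Proof. intros H. induction n as [|n IH]; [reflexivity|]. rewrite pw_S, !act_cons, H. exact IH. Qed.

Lemma pw_inv z u v n : act op (act op z (pw u v n)) (pw v u n) = z.
Proof. induction n as [|n IH]; [reflexivity|]. rewrite pw_Sr, pw_S, act_app, !act_cons, act_nil.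
  rewrite !opK. exact IH. Qed.

Lemma slemma w : forall y u, op u (act op y w) = act op u (rev w ++ [y] ++ w).
Proof. induction w as [|z w IH]; intros y u.
  - reflexivity.
  - rewrite act_cons, IH. simpl rev. rewrite <- app_assoc. rewrite !act_app.
    change ([z] ++ [y] ++ z :: w) with (z :: y :: z :: w). rewrite !act_cons.
    rewrite !act_nil, (opD (op (act op u (rev w)) z) y z), opK. reflexivity. Qed.

Lemma comm_of_fix c u v : act op c [u;v] = c -> forall z, act op z [c;u;v] = act op z [u;v;c].
Proof. intros H z.
  assert (Hz : z = act op (act op z [u;v]) [v;u]) by (rewrite !act_cons, !act_nil, !opK; reflexivity).
  set (y := act op z [u;v]) in *.
  transitivity (act op y [v;u;c;u;v]).
  - rewrite Hz at 1. rewrite <- act_app. reflexivity.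
  - change [v;u;c;u;v] with (rev [u;v] ++ [c] ++ [u;v]). rewrite <- slemma, H.
    unfold y. change [u;v;c] with ([u;v]++[c]). rewrite act_app. reflexivity. Qed.

Lemma comm_pw c u v (hc : forall z, act op z [c;u;v] = act op z [u;v;c]) n :
  forall z, act op z (c :: pw u v n) = act op z (pw u v n ++ [c]).
Proof. induction n as [|n IH]; intros z; [reflexivity|].
  rewrite pw_S. change (c :: u :: v :: pw u v n) with ([c;u;v] ++ pw u v n).
  rewrite act_app, hc. rewrite <- act_app. simpl app. rewrite !act_cons.
  rewrite <- IH, act_cons. reflexivity. Qed.

Lemma G1 x y n : forall z, act op z (x :: pw x y n) = act op z (pw y x n ++ [x]).
Proof. induction n as [|n IH]; intros z; [reflexivity|].
  rewrite !pw_S. simpl app. rewrite !act_cons, opK. rewrite <- IH, act_cons, opK. reflexivity. Qed.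


Lemma pw_SS {A} (u v:A) m : pw u v (S (S m)) = [u;v] ++ [u;v] ++ pw u v m.
Proof. reflexivity. Qed.

Lemma core x c P P' Q R (HQ : Q = S (2*R))
 (hinv2 : forall z, act op (act op z P') P = z)
 (h2: forall z, act op z (P ++ [x]) = act op z (x :: P'))
 (h3: forall z, act op z ([x;c] ++ P') = act op z (P ++ [x;c]))
 (h3': forall z, act op z ([x;c] ++ P) = act op z (P' ++ [x;c]))
 (hR: act op x (pw c x Q) = act op x P) :
 act op x P = act op x (pw x c Q) /\ act op x (pw c x (2*Q)) = x.
Proof.
  assert (A: act op x P' = act op x (pw x c Q)).
  { assert (E: act op x (pw c x Q) = op (act op x (pw x c Q)) x).
    { transitivity (act op x (pw x c Q ++ [x])).
      - rewrite pw_snoc, act_cons, opI. reflexivity.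
      - rewrite act_app. reflexivity. }
    rewrite <- (opK (act op x (pw x c Q)) x), <- E, hR.
    change (op (act op x P) x) with (act op (act op x P) [x]).
    rewrite <- act_app, h2, act_cons, opI. reflexivity. }
  setoid_rewrite act_app in h3. setoid_rewrite act_app in h3'.
  assert (comm2 : forall r z, act op (act op z (pw x c (2*r))) P = act op (act op z P) (pw x c (2*r))).
  { induction r as [|r IH]; intros z; [reflexivity|].
    replace (2 * S r)%nat with (S (S (2*r))) by lia.
    rewrite pw_SS, !act_app, IH, h3', h3. reflexivity. }
  assert (commQ : forall z, act op (act op z (pw x c Q)) P' = act op (act op z P) (pw x c Q)).
  { intros z. rewrite HQ, pw_Sr, !act_app, h3, comm2. reflexivity. }
  assert (D : act op (act op x P') P' = x).
  { rewrite A at 1. rewrite commQ, <- hR. apply pw_inv. }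
  assert (B : act op x P = act op x P').
  { rewrite <- (hinv2 (act op x P')), D. reflexivity. }
  split.
  - rewrite B. exact A.
  - replace (2*Q)%nat with (Q+Q)%nat by lia. rewrite pw_add, act_app, hR, B, A. apply pw_inv.
Qed.

Lemma L3a x y c (hc2 : forall z, act op z [c;y;x] = act op z [y;x;c]) N z :
  act op z ([x;c] ++ pw y x N) = act op z (pw x y N ++ [x;c]).
Proof.
  change ([x;c] ++ pw y x N) with (x :: c :: pw y x N). rewrite act_cons.
  rewrite (comm_pw c y x hc2). rewrite <- act_cons.
  change [x;c] with ([x] ++ [c]). rewrite app_assoc, pw_snoc. reflexivity. Qed.

Lemma L3b x y c (hc1 : forall z, act op z [c;x;y] = act op z [x;y;c]) N z :
  act op z ([x;c] ++ pw x y N) = act op z (pw y x N ++ [x;c]).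
Proof.
  change ([x;c] ++ pw x y N) with (x :: c :: pw x y N). rewrite act_cons.
  rewrite (comm_pw c x y hc1). rewrite <- act_cons.
  change [x;c] with ([x] ++ [c]). rewrite app_assoc, act_app, <- G1. rewrite <- act_app. reflexivity. Qed.

Lemma coreA x y c N Q R (HQ : Q = S (2*R))
  (hc1 : forall z, act op z [c;x;y] = act op z [x;y;c])
  (hc2 : forall z, act op z [c;y;x] = act op z [y;x;c])
  (hR: act op x (pw c x Q) = act op x (pw x y N)) :
  act op x (pw x y N) = act op x (pw x c Q) /\ act op x (pw c x (2*Q)) = x.
Proof.
  apply (core x c (pw x y N) (pw y x N) Q R HQ).
  - intros; apply pw_inv.
  - intros; rewrite pw_snoc; reflexivity.
  - intros; apply L3a; auto.
  - intros; apply L3b; auto.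
  - exact hR.
Qed.

Lemma coreB x y c N Q R (HQ : Q = S (2*R))
  (hc1 : forall z, act op z [c;x;y] = act op z [x;y;c])
  (hc2 : forall z, act op z [c;y;x] = act op z [y;x;c])
  (hR: act op x (pw c x Q) = act op x (pw y x N)) :
  act op x (pw y x N) = act op x (pw x c Q) /\ act op x (pw c x (2*Q)) = x.
Proof.
  apply (core x c (pw y x N) (pw x y N) Q R HQ).
  - intros; apply pw_inv.
  - intros; rewrite <- G1; reflexivity.
  - intros; apply L3b; auto.
  - intros; apply L3a; auto.
  - exact hR.
Qed.


Lemma part34 u v c u0 (hc : forall z, act op z [c;u;v] = act op z [u;v;c]) i j :
  act op u0 (pw c u i ++ pw u v j ++ [u;v;c]) = act op u0 (pw c u (i+1) ++ pw v u j ++ [v]).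
Proof.
  rewrite pw_add, <- app_assoc, !(act_app _ u0 (pw c u i)).
  generalize (act op u0 (pw c u i)) as z; intro z.
  replace (pw u v j ++ [u;v;c]) with (pw u v (S j) ++ [c]) by (rewrite pw_Sr, <- app_assoc; reflexivity).
  replace (pw c u 1 ++ pw v u j ++ [v]) with (c :: pw u v (S j)).
  - symmetry. apply comm_pw. exact hc.
  - rewrite pw_Sr. change [u;v] with ([u]++[v]). rewrite app_assoc, pw_snoc. reflexivity.
Qed.

Lemma lastpart a b c (hab: act op c [a;b] = c) (hba: act op c [b;a] = c)
  (hc1: forall z, act op z [c;a;b] = act op z [a;b;c])
  (hc2: forall z, act op z [c;b;a] = act op z [b;a;c]) i :
  act op c (pw a c i ++ [a]) = act op c (pw a c i ++ [b]).
Proof.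
  assert (K1 : forall z, act op z ([a;c] ++ [a;b]) = act op z ([b;a] ++ [a;c])).
  { intros z. change ([a;c] ++ [a;b]) with (a :: [c;a;b]). change ([b;a] ++ [a;c]) with [b;a;a;c].
    rewrite act_cons, hc1. rewrite !act_cons, !act_nil, !opK. reflexivity. }
  assert (K2 : forall z, act op z ([a;c] ++ [b;a]) = act op z ([a;b] ++ [a;c])).
  { intros z. change ([a;c] ++ [b;a]) with (a :: [c;b;a]). rewrite act_cons, hc2.
    reflexivity. }
  assert (St : forall i, exists bb : bool,
    (forall z, act op z (pw a c i ++ [a;b]) = act op z ((if bb then [a;b] else [b;a]) ++ pw a c i)) /\
    (forall z, act op z (pw a c i ++ [b;a]) = act op z ((if bb then [b;a] else [a;b]) ++ pw a c i))).
  { induction i0 as [|i0 IH].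
    - exists true. split; intros z; simpl; rewrite ?app_nil_r; reflexivity.
    - destruct IH as [bb [H1 H2]]. exists (negb bb).
      change (pw a c (S i0)) with ([a;c] ++ pw a c i0).
      split; intros z; rewrite <- app_assoc, act_app; [rewrite H1|rewrite H2];
        rewrite <- act_app, app_assoc, (act_app _ z (_ ++ _));
        destruct bb; simpl negb; cbv iota;
        rewrite ?K1, ?K2; rewrite <- act_app, <- app_assoc; reflexivity. }
  destruct (St i) as [bb [H1 _]].
  assert (H : act op (act op c (pw a c i)) [a;b] = act op c (pw a c i)).
  { rewrite <- act_app, H1, act_app. destruct bb; [rewrite hab|rewrite hba]; reflexivity. }
  rewrite !act_app. generalize dependent (act op c (pw a c i)). intros w H.
  rewrite act_cons, act_cons, act_nil in H. rewrite act_cons, act_nil, act_cons, act_nil.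
  rewrite <- H at 2. rewrite opK. reflexivity.
Qed.

Lemma goal1 a b c P Q N (hP: P = pw b a N \/ P = pw a b N)
  (hcb : op c b = op c a) (Hab: act op c [a;b]=c)
  (R2: act op a (pw c a Q) = act op a P) : act op c (pw a c (2*Q)) = c.
Proof.
  assert (Hfix : act op c (rev P) = c /\ act op (op c a) P = op c a).
  { assert (Hba : op (op c b) a = c) by (rewrite hcb; apply opK).
    assert (Hab' : op (op c a) b = c) by exact Hab.
    assert (D1 : op (op (op c a) a) b = op c a) by (rewrite opK; exact hcb).
    assert (D2 : op (op (op c a) b) a = op c a) by (rewrite Hab'; reflexivity).
    destruct hP as [-> | ->]; rewrite rev_pw; split; apply fix_pw; assumption. }
  destruct Hfix as [F1 F2].
  pose proof (f_equal (op c) R2) as E. rewrite !slemma in E.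
  rewrite rev_pw in E.
  change ([a] ++ pw c a Q) with (a :: pw c a Q) in E. rewrite <- pw_snoc, app_assoc, <- pw_add in E.
  rewrite act_app, (act_app _ c (rev P)), F1 in E. change ([a] ++ P) with (a :: P) in E.
  rewrite (act_cons _ c a P), F2 in E. change (act op (act op c (pw a c (Q+Q))) [a]) with (op (act op c (pw a c (Q+Q))) a) in E.
  replace (2*Q)%nat with (Q+Q)%nat by lia.
  rewrite <- (opK (act op c (pw a c (Q+Q))) a), E, opK. reflexivity.
Qed.

End Q.

Lemma R3conv {T} (op : T -> T -> T) (opI : forall x, op x x = x) (opK : forall x y, op (op x y) y = x)
  b c Q P3 P3' (h : forall z, act op z (P3 ++ [b]) = act op z (b :: P3'))
  (R3 : act op b (pw b c Q) = act op b P3) : act op b (pw c b Q) = act op b P3'.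
Proof.
  rewrite <- (opI b) at 1. rewrite <- act_cons, <- pw_snoc, act_app, R3, <- act_app, h, act_cons, opI.
  reflexivity.
Qed.

Theorem lemma4p4 (k p q : Z) (hq : (0 < q)%Z) (hgcd : Z.gcd p q = 1%Z)
  (heven : Z.Even (k * q - p)%Z)
  (T : Type) (op : T -> T -> T) (hQ : is_invol_quandle op) (a b c : T)
  (R1 : act op c [a; b] = c)
  (R2 : act op a (pw c a (Z.to_nat q)) = act op a (zpw b a ((k * q - p) / 2)%Z))
  (R3 : act op b (pw b c (Z.to_nat q)) = act op b (zpw a b ((k * q - p) / 2)%Z)) :
  act op c (pw a c (2 * Z.to_nat q)) = c /\
  act op a (pw c a (2 * Z.to_nat q)) = a /\
  act op b (pw c b (2 * Z.to_nat q)) = b /\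
  act op a (zpw b a ((k * q - p) / 2)%Z) = act op a (pw a c (Z.to_nat q)) /\
  act op b (zpw a b ((k * q - p) / 2)%Z) = act op b (pw b c (Z.to_nat q)) /\
  (forall i j : nat, (i <= Z.to_nat q)%nat ->
     (j <= Z.to_nat (Z.abs (k * q - p) / 2))%nat ->
     act op a (pw c a i ++ pw b a j ++ [c]) = act op a (pw c a i ++ [c] ++ pw b a j) /\
     act op b (pw c b i ++ pw a b j ++ [c]) = act op b (pw c b i ++ [c] ++ pw a b j) /\
     act op a (pw c a i ++ pw a b j ++ [a; b; c])
       = act op a (pw c a (i + 1) ++ pw b a j ++ [b]) /\
     act op b (pw c b i ++ pw b a j ++ [b; a; c])
       = act op b (pw c b (i + 1) ++ pw a b j ++ [a])) /\
  (forall i : nat, act op c (pw a c i ++ [a]) = act op c (pw a c i ++ [b])).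
Proof.
  destruct hQ as [opI [opK opD]].
  assert (Hodd : exists R, Z.to_nat q = S (2*R)).
  { destruct (Z.Even_or_Odd q) as [[m Hm]|[m Hm]].
    - exfalso. destruct heven as [t Ht].
      assert (H2 : (2 | Z.gcd p q)%Z).
      { apply Z.gcd_greatest; [exists (k*m - t)%Z | exists m]; lia. }
      rewrite hgcd in H2. destruct H2 as [s Hs]. lia.
    - exists (Z.to_nat m). lia. }
  destruct Hodd as [R HR].
  assert (R1' : op (op c a) b = c) by exact R1.
  assert (hcb : op c b = op c a).
  { rewrite <- R1' at 1. apply opK. }
  assert (Hba : act op c [b;a] = c).
  { change (op (op c b) a = c). rewrite hcb. apply opK. }
  assert (hc1 : forall z, act op z [c;a;b] = act op z [a;b;c]) by (eapply comm_of_fix; eauto).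
  assert (hc2 : forall z, act op z [c;b;a] = act op z [b;a;c]) by (eapply comm_of_fix; eauto).
  assert (Hlast : forall i : nat, act op c (pw a c i ++ [a]) = act op c (pw a c i ++ [b])).
  { intros i. eapply lastpart; eauto. }
  assert (Hij : forall i j : nat,
     act op a (pw c a i ++ pw b a j ++ [c]) = act op a (pw c a i ++ [c] ++ pw b a j) /\
     act op b (pw c b i ++ pw a b j ++ [c]) = act op b (pw c b i ++ [c] ++ pw a b j) /\
     act op a (pw c a i ++ pw a b j ++ [a; b; c])
       = act op a (pw c a (i + 1) ++ pw b a j ++ [b]) /\
     act op b (pw c b i ++ pw b a j ++ [b; a; c])
       = act op b (pw c b (i + 1) ++ pw a b j ++ [a])).
  { intros i j. split; [|split; [|split]].
    - rewrite !(act_app _ a (pw c a i)). change ([c] ++ pw b a j) with (c :: pw b a j).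
      symmetry. apply comm_pw. exact hc2.
    - rewrite !(act_app _ b (pw c b i)). change ([c] ++ pw a b j) with (c :: pw a b j).
      symmetry. apply comm_pw. exact hc1.
    - apply part34. exact hc1.
    - apply part34. exact hc2. }
  unfold zpw in *. destruct (0 <=? (k * q - p) / 2)%Z.
  - set (N := Z.to_nat ((k * q - p) / 2)) in *.
    assert (CA : act op a (pw b a N) = act op a (pw a c (Z.to_nat q)) /\
                 act op a (pw c a (2 * Z.to_nat q)) = a) by (eapply coreB; eauto).
    assert (R3' : act op b (pw c b (Z.to_nat q)) = act op b (pw b a N)).
    { eapply R3conv; eauto. intros z. rewrite <- G1; auto. }
    assert (CB : act op b (pw b a N) = act op b (pw b c (Z.to_nat q)) /\
                 act op b (pw c b (2 * Z.to_nat q)) = b) by (eapply coreA; eauto).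
    assert (G : act op c (pw a c (2 * Z.to_nat q)) = c) by (eapply goal1 with (P := pw b a N) (N := N); eauto).
    destruct CA, CB.
    repeat split; auto; intros; apply Hij.
  - set (N := Z.to_nat (- ((k * q - p) / 2))) in *.
    assert (CA : act op a (pw a b N) = act op a (pw a c (Z.to_nat q)) /\
                 act op a (pw c a (2 * Z.to_nat q)) = a) by (eapply coreA; eauto).
    assert (R3' : act op b (pw c b (Z.to_nat q)) = act op b (pw a b N)).
    { eapply R3conv; eauto. intros z. rewrite pw_snoc; reflexivity. }
    assert (CB : act op b (pw a b N) = act op b (pw b c (Z.to_nat q)) /\
                 act op b (pw c b (2 * Z.to_nat q)) = b) by (eapply coreB; eauto).
    assert (G : act op c (pw a c (2 * Z.to_nat q)) = c) by (eapply goal1 with (P := pw a b N) (N := N); eauto).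
    destruct CA, CB.
    repeat split; auto; intros; apply Hij.
Qed.
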